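(* There is an absolute constant $C\ge1$ such that for every $n\ge3$ and every $\vec a=a_1\cdots a_n\in\mathbb N^n$ (writing $X\sim Y$ for $C^{-1}Y\le X\le CY$): (1) $\#\Xi(\mathbf1,\vec a)\sim q_n(\vec a)/a_1$; (2) $\#\Xi(\mathbf2,\vec a)\sim q_n(\vec a)$; (3) $\#\Xi(\mathbf3,\vec a)\sim q_n(\vec a)$ if $a_1\ge2$; (4) $\#\Xi(\mathbf3,\vec a)\sim q_n(\vec a)/a_2$ if $a_1=1$; (5) $\#\Xi(\mathbf t,\vec a,\mathbf2)+\#\Xi(\mathbf t,\vec a,\mathbf3)\sim\#\Xi(\mathbf t,\vec a)$ for every $\mathbf t\in\{\mathbf1,\mathbf2,\mathbf3\}$; (6) $\#\Xi(\mathbf2,\vec a,\mathbf1)\sim q_n(\vec a)$.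
   Context: $q_n(\vec a)$ is defined by $q_{-1}=0$, $q_0=1$, $q_{k+1}=a_{k+1}q_k+q_{k-1}$. For $m\ge1$ let $\mathcal A_m=\{(\mathbf1,k)_m:1\le k\le m+1\}\cup\{(\mathbf2,1)_m\}\cup\{(\mathbf3,k)_m:1\le k\le m\}$, type $\mathbf t_{(\mathbf t,k)_m}=\mathbf t$. For $\mathbf t\in\{\mathbf1,\mathbf2,\mathbf3\}$, $\hat e\in\mathcal A_m$: $\mathbf t\to\hat e$ iff $(\mathbf t,\hat e)$ is $(\mathbf1,(\mathbf2,1)_m)$, $(\mathbf2,(\mathbf1,k)_m)$ with $k\le m+1$, $(\mathbf2,(\mathbf3,k)_m)$ with $k\le m$, $(\mathbf3,(\mathbf1,k)_m)$ with $k\le m$, or $(\mathbf3,(\mathbf3,k)_m)$ with $k\le m-1$; $e\to\hat e$ iff $\mathbf t_e\to\hat e$. $\Xi(\mathbf t,\vec a)$ is the set of words $w_1\cdots w_n\in\prod_{j=1}^n\mathcal A_{a_j}$ with $\mathbf t\to w_1$ and $w_j\to w_{j+1}$ ($1\le j<n$); $\Xi(\mathbf t,\vec a,\mathbf t')=\{w\in\Xi(\mathbf t,\vec a):\mathbf t_{w_n}=\mathbf t'\}$. *)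

(* Defs.v *)
From mathcomp Require Import all_boot all_order all_algebra.
Set Implicit Arguments. Unset Strict Implicit. Unset Printing Implicit Defensive.
Import Order.TTheory GRing.Theory Num.Theory.

Inductive typ := T1 | T2 | T3.

Definition typ_eqb (s t : typ) : bool :=
  match s, t with T1, T1 | T2, T2 | T3, T3 => true | _, _ => false end.

(* A letter (t,k)_m is represented by the pair (t, k); the index m is
   determined by the position in the word (w_j ranges over A_{a_j}). *)
Definition letter := (typ * nat)%type.

(* Explicit enumeration (without repetition) of the alphabet A_m. *)
Definition alph (m : nat) : seq letter :=
  [seq (T1, k) | k <- iota 1 m.+1] ++ [:: (T2, 1)] ++ [seq (T3, k) | k <- iota 1 m].

Definition arrow (t : typ) (m : nat) (e : letter) : bool :=
  match t, e with
  | T1, (T2, k) => k == 1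
  | T2, (T1, k) => k <= m.+1
  | T2, (T3, k) => k <= m
  | T3, (T1, k) => k <= m
  | T3, (T3, k) => k <= m.-1
  | _, _ => false
  end.

Definition words (a : seq nat) : seq (seq letter) :=
  foldr (fun m ws => [seq e :: w | e <- alph m, w <- ws]) [:: [::]] a.

Fixpoint chain (t : typ) (a : seq nat) (w : seq letter) : bool :=
  match a, w with
  | m :: a', e :: w' => arrow t m e && chain e.1 a' w'
  | _, _ => true
  end.

Definition Xi (t : typ) (a : seq nat) : seq (seq letter) :=
  [seq w <- words a | chain t a w].

Definition Xi3 (t : typ) (a : seq nat) (t' : typ) : seq (seq letter) :=
  [seq w <- Xi t a | typ_eqb (last (T1, 0) w).1 t'].

(* q_n(a): q_{-1} = 0, q_0 = 1, q_{k+1} = a_{k+1} q_k + q_{k-1}. *)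
Definition qn (a : seq nat) : nat :=
  (foldl (fun pq x => (pq.2, x * pq.2 + pq.1)) (0, 1) a).2.

Definition sim (C X Y : rat) : Prop := (C^-1 * Y <= X /\ X <= C * Y)%R.

(* Main.v *)
Require Import Defs.
From mathcomp Require Import all_boot all_order all_algebra.
From mathcomp Require Import ring zify.
Import Order.TTheory GRing.Theory Num.Theory.

Definition step (t : typ) (m : nat) (g : typ -> nat) : nat :=
  match t with
  | T1 => g T2
  | T2 => m.+1 * g T1 + m * g T3
  | T3 => m * g T1 + m.-1 * g T3
  end.

Fixpoint F (t : typ) (a : seq nat) (f : typ -> nat) : nat :=
  match a with [::] => f t | m :: a' => step t m (fun s => F s a' f) end.

Definition G (fb : typ -> bool) (d t : typ) (a : seq nat) : nat :=
  count (fun w => chain t a w && fb (last (d, 0) w).1) (words a).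

Lemma last_fst (e : letter) w : (last e w).1 = (last (e.1, 0) w).1.
Proof. by case/lastP: w => [|w x] //; rewrite !last_rcons. Qed.

Lemma count_letter fb t m e a d :
  count (fun w => chain t (m :: a) (e :: w) && fb (last (d, 0) (e :: w)).1) (words a)
  = arrow t m e * G fb e.1 e.1 a.
Proof.
rewrite /G /=; case: (arrow t m e) => /=.
  by rewrite mul1n; apply: eq_count => w; rewrite last_fst.
by rewrite mul0n; elim: (words a).
Qed.

Lemma sum_iota c X n : sumn [seq (k <= c) * X | k <- iota 1 n] = minn n c * X.
Proof.
elim: n => [|n IH]; first by rewrite min0n.
rewrite -[n.+1]addn1 iotaD map_cat sumn_cat IH /= add1n addn0.
rewrite -mulnDl; congr (_ * _); case: (ltnP n c) => h /=; lia.
Qed.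

Lemma sum_false (X : nat) (s : seq nat) : sumn [seq (false : nat) * X | k <- s] = 0.
Proof. by elim: s. Qed.

Lemma sum_gen (f : letter -> nat) ty c X n :
  (forall k, 0 < k -> f (ty, k) = (k <= c) * X) ->
  sumn [seq f e | e <- [seq (ty, k) | k <- iota 1 n]] = minn n c * X.
Proof.
move=> H; rewrite -map_comp -sum_iota; congr sumn; apply/eq_in_map => k.
by rewrite mem_iota => /andP[h _]; rewrite /= H.
Qed.

Lemma G_cons fb d t m a : G fb d t (m :: a) = step t m (fun s => G fb s s a).
Proof.
rewrite {1}/G (_ : words (m :: a) = flatten [seq [seq e :: w | w <- words a] | e <- alph m]) //.
rewrite count_flatten -map_comp.
have -> : [seq (count (fun w => chain t (m :: a) w && fb (last (d, 0) w).1) \o (fun e => [seq e :: w | w <- words a])) e | e <- alph m]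
   = [seq arrow t m e * G fb e.1 e.1 a | e <- alph m].
  by apply: eq_map => e; rewrite /= count_map -(count_letter _ _ _ _ _ d).
rewrite /alph !map_cat !sumn_cat.
case: t.
- rewrite (@sum_gen _ T1 0 (G fb T1 T1 a)) ?(@sum_gen _ T3 0 (G fb T3 T3 a)); 
    try by move=> k /= k0; rewrite leqNgt k0.
  by rewrite /= !minn0 !mul0n mul1n add0n !addn0.
- rewrite (@sum_gen (fun e => arrow T2 m e * G fb e.1 e.1 a) T1 m.+1 (G fb T1 T1 a)) ?(@sum_gen (fun e => arrow T2 m e * G fb e.1 e.1 a) T3 m (G fb T3 T3 a)) //.
  rewrite /= (_ : minn m.+1 m.+1 = m.+1); last by lia.
  by rewrite (_ : minn m m = m); [rewrite mul0n !addn0 | lia].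
- rewrite (@sum_gen (fun e => arrow T3 m e * G fb e.1 e.1 a) T1 m (G fb T1 T1 a)) ?(@sum_gen (fun e => arrow T3 m e * G fb e.1 e.1 a) T3 m.-1 (G fb T3 T3 a)) //.
  rewrite /= (_ : minn m.+1 m = m); last by lia.
  by rewrite (_ : minn m m.-1 = m.-1); [rewrite mul0n !addn0 | lia].
Qed.

Definition ind (t' : typ) (s : typ) : nat := typ_eqb s t'.
Definition sum3 (g : typ -> nat) := g T1 + g T2 + g T3.

Lemma G_F fb t a : G fb t t a = F t a (fun s => fb s).
Proof.
elim: a t => [|m a IH] t; first by rewrite /G /= addn0.
rewrite G_cons /=; case: t => /=; by rewrite !IH.
Qed.

Lemma size_Xi t a : size (Xi t a) = F t a (fun _ => 1).
Proof.
rewrite /Xi size_filter -(G_F predT) /G; apply: eq_count => w /=.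
by rewrite andbT.
Qed.

Lemma step_ext t m f g : f =1 g -> step t m f = step t m g.
Proof. by move=> h; case: t => /=; rewrite !h. Qed.

Lemma size_Xi3 t m a t' : size (Xi3 t (m :: a) t') = F t (m :: a) (ind t').
Proof.
rewrite /Xi3 /Xi size_filter count_filter.
transitivity (G (fun s => typ_eqb s t') T1 t (m :: a)).
  by apply: eq_count => w /=; rewrite andbC.
rewrite G_cons /=; apply: step_ext => s; by rewrite G_F.
Qed.

Lemma F_tot t a : F t a (fun _ => 1) = sum3 (fun r => F t a (ind r)).
Proof.
elim: a t => [|m a IH] t; first by case: t.
rewrite /= (@step_ext _ _ _ _ IH); case: t; rewrite /sum3 /=; ring.
Qed.

Lemma F_rcons t p m f : F t (rcons p m) f = sum3 (fun s => F t p (ind s) * step s m f).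
Proof.
elim: p t => [|x p IH] t.
  by case: t; rewrite /sum3 /= ?mul1n ?mul0n ?addn0 ?add0n.
rewrite rcons_cons /= (@step_ext _ _ _ _ IH); case: t; rewrite /sum3 /=; ring.
Qed.

Definition ff (pq : nat * nat) (x : nat) := (pq.2, x * pq.2 + pq.1).

Lemma foldl_lin a p0 p1 : foldl ff (p0, p1) a =
  (p0 * (foldl ff (1, 0) a).1 + p1 * (foldl ff (0, 1) a).1,
   p0 * (foldl ff (1, 0) a).2 + p1 * (foldl ff (0, 1) a).2).
Proof.
elim: a p0 p1 => [|x a IH] p0 p1 /=; first by congr pair; ring.
rewrite /ff /= [LHS]IH (IH 0 (x * 0 + 1)) (IH 1 (x * 1 + 0)) /=.
congr pair; ring.
Qed.

Lemma qnE a : qn a = (foldl ff (0, 1) a).2.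
Proof. by []. Qed.

Lemma qn_cons x c : qn (x :: c) = (foldl ff (1, 0) c).2 + x * qn c.
Proof.
rewrite !qnE /= /ff /= foldl_lin /=; ring.
Qed.

Lemma qn_nil : qn [::] = 1. Proof. by []. Qed.
Lemma qn_one x : qn [:: x] = x. Proof. by rewrite qn_cons /= add0n muln1. Qed.

Lemma qn_cons2 x y c : qn (x :: y :: c) = x * qn (y :: c) + qn c.
Proof.
rewrite qn_cons /= /ff /= foldl_lin /= -qnE; ring.
Qed.

Lemma qn_mono a : all (fun x => 0 < x) a -> qn (behead a) <= qn a.
Proof.
case: a => [|x [|y c]] //=.
  by rewrite qn_one qn_nil => /andP[].
rewrite qn_cons2 => /andP[hx _].
have : qn (y :: c) <= x * qn (y :: c) by rewrite leq_pmull.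
lia.
Qed.

Definition one := fun _ : typ => 1.
Notation u b := (F T1 b one).
Notation w b := (F T2 b one).
Notation v b := (F T3 b one).

Lemma invar b : b != [::] -> all (fun x => 0 < x) b ->
  [/\ qn b <= w b <= 3 * qn b, qn b <= u b + v b <= 3 * qn b &
      qn (behead b) <= u b <= 3 * qn (behead b)].
Proof.
elim: b => // x c IH _ /andP[hx hc].
case: x hx => // x _.
case: c IH hc => [|y c'] IH hc.
  rewrite /= qn_one qn_nil /one /=; split; lia.
have [/andP[h1 h2] /andP[h3 h4] /andP[h5 h6]] := IH isT hc.
move: h1 h2 h3 h4 h5 h6; rewrite qn_cons2 /behead.
set uc := F T1 (y :: c') one; set wc := F T2 (y :: c') one; set vc := F T3 (y :: c') one.
rewrite (_ : F T1 (x.+1 :: y :: c') one = wc) //.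
rewrite (_ : F T2 (x.+1 :: y :: c') one = x.+2 * uc + x.+1 * vc) //.
rewrite (_ : F T3 (x.+1 :: y :: c') one = x.+1 * uc + x * vc) //.
move=> h1 h2 h3 h4 h5 h6; clearbody uc wc vc.
have p1 : x * qn (y :: c') <= x * (uc + vc) by rewrite leq_mul2l h3 orbT.
have p2 : x * (uc + vc) <= x * (3 * qn (y :: c')) by rewrite leq_mul2l h4 orbT.
rewrite !mulSn !mulnDr in p1 p2 *.
set Q := qn (y :: c') in p1 p2 h1 h2 h3 h4 *; set Q' := qn c' in h5 h6 *; clearbody Q Q'. split; lia.
Qed.

Lemma simN (X Y : nat) : (Y <= X * 5)%N -> (X <= 5 * Y)%N -> sim 5%:R X%:R Y%:R.
Proof.
move=> h1 h2; rewrite /sim; split.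
  by rewrite mulrC ler_pdivrMr ?ltr0n // -natrM ler_nat.
by rewrite -natrM ler_nat.
Qed.

Lemma simD (X Y d : nat) : (0 < d)%N -> (Y <= X * 5 * d)%N -> (X * d <= 5 * Y)%N ->
  sim 5%:R X%:R (Y%:R / d%:R).
Proof.
move=> hd h1 h2; rewrite /sim; split.
  by rewrite mulrC ler_pdivrMr ?ltr0n // ler_pdivrMr ?ltr0n // -!natrM ler_nat.
by rewrite mulrA ler_pdivlMr ?ltr0n // -!natrM ler_nat.
Qed.

Lemma g31 t p m : F t (rcons p m) (ind T3) <= F t (rcons p m) (ind T1).
Proof.
rewrite !F_rcons /sum3 /= !muln0 !muln1 !addn0 !add0n.
have : m.-1 <= m by lia.
move: (F t p (ind T2)) (F t p (ind T3)) => A B h.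
have : B * m.-1 <= B * m by rewrite leq_mul2l h orbT.
have : A * m <= A * m.+1 by rewrite leq_mul2l leqnSn orbT.
lia.
Qed.

Lemma g1b p m m' : 0 < m' ->
  F T2 (rcons (rcons p m) m') (ind T1) <=
  3 * (F T2 (rcons (rcons p m) m') (ind T2) + F T2 (rcons (rcons p m) m') (ind T3)).
Proof.
move=> hm; have h31 := g31 T2 p m.
rewrite !(F_rcons _ (rcons p m)) /sum3 /= !muln0 !muln1 !addn0 !add0n.
move: (F T2 (rcons p m) (ind T1)) (F T2 (rcons p m) (ind T2)) (F T2 (rcons p m) (ind T3)) h31
  => A B D h.
case: m' hm => // k _ /=.
rewrite !mulnS; lia.
Qed.

Lemma sizeXi t a : size (Xi t a) = F t a one.
Proof. exact: size_Xi. Qed.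

Lemma sizeXi3 t a t' : a != [::] -> size (Xi3 t a t') = F t a (ind t').
Proof. by case: a => // m a _; rewrite size_Xi3. Qed.

Lemma part1to4 x y z c : all (fun x => 0 < x) [:: x, y, z & c] ->
  let a := [:: x, y, z & c] in
  sim 5%:R (size (Xi T1 a))%:R ((qn a)%:R / (nth 0 a 0)%:R) /\
  sim 5%:R (size (Xi T2 a))%:R (qn a)%:R /\
  (2 <= nth 0 a 0 -> sim 5%:R (size (Xi T3 a))%:R (qn a)%:R) /\
  (nth 0 a 0 = 1 -> sim 5%:R (size (Xi T3 a))%:R ((qn a)%:R / (nth 0 a 1)%:R)).
Proof.
move=> hpos a; rewrite /a !sizeXi.
have [/andP[i1 i2] /andP[i3 i4] /andP[i5 i6]] := invar [:: x, y, z & c] isT hpos.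
have hpos' : all (fun x => 0 < x) [:: y, z & c] by case/andP: hpos.
have hx : 0 < x by case/andP: hpos.
have hy : 0 < y by case/andP: hpos'.
have [/andP[j1 j2] /andP[j3 j4] /andP[j5 j6]] := invar [:: y, z & c] isT hpos'.
have m1 := qn_mono [:: y, z & c] hpos'.
have hpos'' : all (fun x => 0 < x) [:: z & c] by case/andP: hpos'.
have m2 := qn_mono [:: z & c] hpos''.
have eUa : F T1 [:: x, y, z & c] one = F T2 [:: y, z & c] one := erefl.
have eVa : F T3 [:: x, y, z & c] one = x * F T1 [:: y, z & c] one + x.-1 * F T3 [:: y, z & c] one := erefl.
have eQa := qn_cons2 x y (z :: c).
have eQb := qn_cons2 y z c.
rewrite /behead /nth in i5 i6 j5 j6 m1 m2 *.
rewrite eVa in i3 i4 *; rewrite eUa in i3 i4 i5 i6 *.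
move: i1 i2 i3 i4 i5 i6 j1 j2 j3 j4 j5 j6 m1 m2 eQa eQb.
move: (F T2 [:: x, y, z & c] one) (F T3 [:: x, y, z & c] one) (F T2 [:: y, z & c] one)
  (F T1 [:: y, z & c] one) (F T3 [:: y, z & c] one) => Wa Va Wb Ub Vb.
move: (qn [:: x, y, z & c]) (qn [:: y, z & c]) (qn [:: z & c]) (qn c) => Qa Qb Qc Qd.
move=> i1 i2 i3 i4 i5 i6 j1 j2 j3 j4 j5 j6 m1 m2 eQa eQb.
split; last split; last split.
- apply: simD => //.
    have : x * Qb <= x * Wb by rewrite leq_mul2l i5 orbT.
    have : Wb <= x * Wb by rewrite leq_pmull.
    lia.
  have : Wb * x <= 3 * Qb * x by rewrite leq_mul2r i6 orbT.
  lia.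
- apply: simN; lia.
- clear hpos a eUa eVa; case: x hx i1 i2 i3 i4 i5 i6 eQa => [|[|k]] // _ i1 i2 i3 i4 i5 i6 eQa _.
  apply: simN; last by lia.
  have : k.+1 * Qb <= k.+1 * (Ub + Vb) by rewrite leq_mul2l j3 orbT.
  rewrite /= !mulSn in eQa * => h; lia.
- move=> ex; clear hpos a eUa eVa; subst x; apply: simD => //.
    have : y * Qc <= y * Ub by rewrite leq_mul2l j5 orbT.
    have : Qc <= y * Qc by rewrite leq_pmull.
    rewrite /= mul1n mul0n addn0 in eQa *; lia.
  have : Ub * y <= 3 * Qc * y by rewrite leq_mul2r j6 orbT.
  have : Qc * y <= Qb by lia.
  rewrite /= mul1n mul0n addn0 in eQa *; lia.
Qed.

Lemma rcons_neq0 (p : seq nat) m : rcons p m != [::].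
Proof. by case: p. Qed.

Lemma part56 p m' m t : all (fun x => 0 < x) (rcons (rcons p m') m) ->
  let a := rcons (rcons p m') m in
  sim 5%:R (size (Xi3 t a T2) + size (Xi3 t a T3))%:R (size (Xi t a))%:R.
Proof.
move=> hpos a; rewrite /a !sizeXi3 ?rcons_neq0 // sizeXi (F_tot t).
rewrite /sum3 !(F_rcons t (rcons p m')) /sum3 /= !muln0 !muln1 !addn0 !add0n.
have h := g31 t p m'.
move: hpos; rewrite all_rcons => /andP[hm _].
move: (F t (rcons p m') (ind T1)) (F t (rcons p m') (ind T2)) (F t (rcons p m') (ind T3)) h
  => A B D h.
clear a; case: m hm => // k _ /=; rewrite !mulnS.
apply: simN; lia.
Qed.

Lemma part6 p m'' m' m : all (fun x => 0 < x) (rcons (rcons (rcons p m'') m') m) ->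
  let a := rcons (rcons (rcons p m'') m') m in
  sim 5%:R (size (Xi3 T2 a T1))%:R (qn a)%:R.
Proof.
move=> hpos a.
have [/andP[i1 i2] _ _] := invar a (rcons_neq0 _ _) hpos.
rewrite /a sizeXi3 ?rcons_neq0 //.
move: i1 i2; rewrite /a (F_tot T2).
rewrite /sum3 !(F_rcons T2 (rcons (rcons p m'') m')) /sum3 /= !muln0 !muln1 !addn0 !add0n.
move: hpos; rewrite all_rcons => /andP[hm]; rewrite all_rcons => /andP[hm' _].
have h := g1b p m'' m' hm'.
move: (F T2 (rcons (rcons p m'') m') (ind T1)) (F T2 (rcons (rcons p m'') m') (ind T2))
  (F T2 (rcons (rcons p m'') m') (ind T3)) h => A B D h.
move: (qn _) => Q.
clear a; case: m hm => // k _ /=; rewrite !mulnS => i1 i2.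
apply: simN; lia.
Qed.

Theorem lemma4p5 :
  exists C : rat, (1 <= C)%R /\
  forall a : seq nat, 3 <= size a -> all (fun x => 0 < x) a ->
  (* (1) *) sim C (size (Xi T1 a))%:R ((qn a)%:R / (nth 0 a 0)%:R) /\
  (* (2) *) sim C (size (Xi T2 a))%:R (qn a)%:R /\
  (* (3) *) (2 <= nth 0 a 0 -> sim C (size (Xi T3 a))%:R (qn a)%:R) /\
  (* (4) *) (nth 0 a 0 = 1 -> sim C (size (Xi T3 a))%:R ((qn a)%:R / (nth 0 a 1)%:R)) /\
  (* (5) *) (forall t : typ,
               sim C (size (Xi3 t a T2) + size (Xi3 t a T3))%:R (size (Xi t a))%:R) /\
  (* (6) *) sim C (size (Xi3 T2 a T1))%:R (qn a)%:R.
Proof.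
exists (5%:R)%R; split; first by rewrite ler1n.
move=> a ha hpos.
have [x [y [z [c ea]]]] : exists x y z c, a = [:: x, y, z & c].
  by case: a ha {hpos} => [|x [|y [|z c]]] // _; exists x, y, z, c.
have [p [m'' [m' [m ea']]]] : exists p m'' m' m, a = rcons (rcons (rcons p m'') m') m.
  case/lastP: a ha {hpos ea} => [|a1 m] //; rewrite size_rcons => ha.
  case/lastP: a1 ha => [|a2 m'] //; rewrite size_rcons => ha.
  case/lastP: a2 ha => [|p m''] //; rewrite size_rcons => ha.
  by exists p, m'', m', m.
have hp1 := hpos; rewrite ea in hp1.
have := part1to4 x y z c hp1; rewrite -ea => -[h1 [h2 [h3 h4]]].
do 4! (split => //).
have hp2 := hpos; rewrite ea' in hp2.
split.
  move=> t; have := part56 (rcons p m'') m' m t hp2; by rewrite -ea'.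
have := part6 p m'' m' m hp2; by rewrite -ea'.
Qed.
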